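(* Let $\mathcal K$ be an abstract Krivine structure. Define on $\mathcal P(\Pi)$ the relation $P\sqsubseteq Q$ iff there is $t\in\mathrm{QP}$ with $t\perp\pi$ for every $\pi\in\{s\cdot\rho: s\in{}^\perp P,\ \rho\in Q\}$, and let $\sqsubseteq_\bullet$ be its restriction to $\mathcal P_\bullet(\Pi)$. Then the inclusion $(\mathcal P_\bullet(\Pi),\sqsubseteq_\bullet)\hookrightarrow(\mathcal P(\Pi),\sqsubseteq)$ is an equivalence of preorders.
   Context: An abstract Krivine structure $\mathcal K$ consists of sets $\Lambda,\Pi$, a relation $\perp\subseteq\Lambda\times\Pi$, a map $\mathrm{push}$ written $t\cdot\pi$ (associating to the right), an application $ts$ on $\Lambda$, a subset $\mathrm{QP}\subseteq\Lambda$ closed under application, and $\mathsf K,\mathsf S\in\mathrm{QP}$ with: $t\perp s\cdot\pi\Rightarrow ts\perp\pi$; $t\perp\pi\Rightarrow\mathsf K\perp t\cdot s\cdot\pi$; $tu(su)\perp\pi\Rightarrow\mathsf S\perp t\cdot s\cdot u\cdot\pi$. Polars: $L^\perp=\{\pi:\forall t\in L,\ t\perp\pi\}$, ${}^\perp P=\{t:\forall\pi\in P,\ t\perp\pi\}$; $\overline P=({}^\perp P)^\perp$; $\widehat P=\bigcup_{\pi\in P}\overline{\{\pi\}}$; $\mathcal P_\bullet(\Pi)=\{P:\widehat P=P\}$. A monotone map $f$ between preorders is an equivalence if there is a monotone $g$ in the other direction with $g\circ f$ and $f\circ g$ each pointwise isomorphic (mutually $\le$) to the identity. *)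

(* Defs.v *)
Set Implicit Arguments.

Record AKS := {
  Lam : Type;
  Pi : Type;
  perp : Lam -> Pi -> Prop;
  push : Lam -> Pi -> Pi;
  app : Lam -> Lam -> Lam;
  QP : Lam -> Prop;
  QP_app : forall t s, QP t -> QP s -> QP (app t s);
  kK : Lam;
  kS : Lam;
  kK_QP : QP kK;
  kS_QP : QP kS;
  ax_push : forall t s pi, perp t (push s pi) -> perp (app t s) pi;
  ax_K : forall t s pi, perp t pi -> perp kK (push t (push s pi));
  ax_S : forall t s u pi, perp (app (app t u) (app s u)) pi ->
           perp kS (push t (push s (push u pi)))
}.

Section Polars.
Variable K : AKS.

Definition polL (L : Lam K -> Prop) : Pi K -> Prop :=
  fun pi => forall t, L t -> perp K t pi.
Definition polP (P : Pi K -> Prop) : Lam K -> Prop :=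
  fun t => forall pi, P pi -> perp K t pi.
Definition clos (P : Pi K -> Prop) : Pi K -> Prop := polL (polP P).
Definition hat (P : Pi K -> Prop) : Pi K -> Prop :=
  fun rho => exists pi, P pi /\ clos (fun x => x = pi) rho.
Definition Pbullet (P : Pi K -> Prop) : Prop := forall rho, hat P rho <-> P rho.

Definition sqle (P Q : Pi K -> Prop) : Prop :=
  exists t, QP K t /\
    forall pi, (exists s rho, polP P s /\ Q rho /\ pi = push K s rho) -> perp K t pi.

Definition PbulletT := { P : Pi K -> Prop | Pbullet P }.
Definition sqle_bullet (P Q : PbulletT) : Prop := sqle (proj1_sig P) (proj1_sig Q).
Definition incl_bullet (P : PbulletT) : Pi K -> Prop := proj1_sig P.
End Polars.

Definition monotone {A B : Type} (leA : A -> A -> Prop) (leB : B -> B -> Prop)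
  (f : A -> B) : Prop := forall x y, leA x y -> leB (f x) (f y).

Definition preorder_equivalence {A B : Type} (leA : A -> A -> Prop)
  (leB : B -> B -> Prop) (f : A -> B) : Prop :=
  monotone leA leB f /\
  exists g : B -> A, monotone leB leA g /\
    (forall x, leA (g (f x)) x /\ leA x (g (f x))) /\
    (forall y, leB (f (g y)) y /\ leB y (f (g y))).

(* Main.v *)
Require Import Defs.

Section Aux.
Variable K : AKS.

Definition tI : Lam K := app K (app K (kS K) (kK K)) (kK K).

Lemma tI_QP : QP K tI.
Proof. unfold tI; repeat apply QP_app; auto using kK_QP, kS_QP. Qed.

Lemma tI_perp s rho : perp K s rho -> perp K tI (push K s rho).
Proof.
  intro H. unfold tI. apply ax_push, ax_push, ax_S.
  apply ax_push, ax_push, ax_K; exact H.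
Qed.

Definition eta (t : Lam K) : Lam K :=
  app K (app K (kS K) (app K (app K (kS K) (app K (kK K) (kK K))) t)) (kK K).

Lemma eta_QP t : QP K t -> QP K (eta t).
Proof. intro; unfold eta; repeat apply QP_app; auto using kK_QP, kS_QP. Qed.

Lemma eta_perp t s rho : perp K (app K t s) rho -> perp K (eta t) (push K s rho).
Proof.
  intro H. unfold eta. apply ax_push, ax_push, ax_S.
  apply ax_push, ax_push, ax_push, ax_push, ax_S.
  apply ax_push, ax_push, ax_push, ax_K, ax_K. exact H.
Qed.

Lemma in_hat (P : Pi K -> Prop) rho : P rho -> hat K P rho.
Proof. intro H; exists rho; split; auto. intros t Ht; apply Ht; reflexivity. Qed.

Lemma hat_Pb (P : Pi K -> Prop) : Pbullet K (hat K P).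
Proof.
  intro rho; split.
  - intros [pi [[pi' [HP Hc]] Hc']]. exists pi'; split; auto.
    intros t Ht. apply Hc'. intros x ->. apply Hc. exact Ht.
  - apply in_hat.
Qed.

Lemma le_hat (P : Pi K -> Prop) : sqle K P (hat K P).
Proof.
  exists tI; split; [apply tI_QP|].
  intros pi [s [rho [Hs [[pi' [HP Hc]] ->]]]].
  apply tI_perp. apply Hc. intros x ->. apply Hs; exact HP.
Qed.

Lemma hat_le (P : Pi K -> Prop) : sqle K (hat K P) P.
Proof.
  exists tI; split; [apply tI_QP|].
  intros pi [s [rho [Hs [HP ->]]]].
  apply tI_perp. apply Hs. apply in_hat; exact HP.
Qed.

Lemma hat_mono (P Q : Pi K -> Prop) : sqle K P Q -> sqle K (hat K P) (hat K Q).
Proof.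
  intros [t [Ht H]]. exists (eta t); split; [apply eta_QP; auto|].
  intros pi [s [rho [Hs [[rho0 [HQ Hc]] ->]]]].
  apply eta_perp. apply Hc. intros x ->. apply ax_push. apply H.
  exists s, rho0; repeat split; auto.
  intros p Hp. apply Hs. apply in_hat; exact Hp.
Qed.

End Aux.

Theorem mainTheorem9 (K : AKS) :
  preorder_equivalence (@sqle_bullet K) (@sqle K) (@incl_bullet K).
Proof.
  split.
  - intros x y H; exact H.
  - exists (fun P : Pi K -> Prop => exist (Pbullet K) (hat K P) (hat_Pb K P)). split; [|split].
    + intros x y H. unfold sqle_bullet; simpl. apply hat_mono; exact H.
    + intro x. unfold sqle_bullet, incl_bullet; simpl. split; [apply hat_le|apply le_hat].
    + intro y. unfold incl_bullet; simpl. split; [apply hat_le|apply le_hat].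
Qed.
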